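(* Let $\Gamma_1,\Gamma_2$ be first-order theories over $\mathcal L$. Then $\Gamma_1$ and $\Gamma_2$ are uniformly equivalent if and only if the set of QHT-interpretations of $\mathcal L$ that are there-closed in $C_s(\Gamma_1)$ equals the set of QHT-interpretations of $\mathcal L$ that are there-closed in $C_s(\Gamma_2)$.
   Context: A first-order signature $\mathcal L=\langle\mathcal F,\mathcal P\rangle$ consists of disjoint sets of function symbols $\mathcal F$ (0-ary ones are object constants) and predicate symbols $\mathcal P$, with arities. Formulas are built as in first-order logic with equality from atoms, equations $t_1=t_2$ and $\bot$ using $\wedge,\vee,\to,\forall,\exists$; $\neg\phi$ abbreviates $\phi\to\bot$; a theory is a set of sentences. For a nonempty universe $\mathcal U$ let $\mathcal C_{\mathcal U}=\{c_\varepsilon\mid\varepsilon\in\mathcal U\}$ be fresh distinct constants and $\mathrm{At}(\mathcal P,\mathcal U)$ the set of atoms $p(c_{\varepsilon_1},..,c_{\varepsilon_n})$, $p\in\mathcal P$. A QHT-interpretation of $\mathcal L$ is a triple $\langle I,J,K\rangle$ where $I$ interprets $\mathcal F$ on some universe $\mathcal U$ (with $I(c_\varepsilon)=\varepsilon$) and $J\subseteq K\subseteq\mathrm{At}(\mathcal P,\mathcal U)$; total if $J=K$. $\langle I,K\rangle$ is the classical interpretation with function part $I$ where exactly the atoms of $K$ are true. Satisfaction by $M=\langle I,J,K\rangle$: $M\models p(t_1,..,t_n)$ iff $p(c_{t_1^I},..,c_{t_n^I})\in J$; $M\models t_1=t_2$ iff $t_1^I=t_2^I$; $M\not\models\bot$;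 $\wedge,\vee$ componentwise; $M\models\phi\to\psi$ iff ($M\not\models\phi$ or $M\models\psi$) and $\langle I,K\rangle\models\phi\to\psi$ classically; $M\models\forall x\phi(x)$ iff $M\models\phi(c_\varepsilon)$ and $\langle I,K\rangle\models\phi(c_\varepsilon)$ for all $\varepsilon$; $M\models\exists x\phi(x)$ iff $M\models\phi(c_\varepsilon)$ for some $\varepsilon$. $\langle I,K\rangle$ is an answer set of $\Gamma$ iff $\langle I,K,K\rangle\models\Gamma$ and $\langle I,J,K\rangle\not\models\Gamma$ for every $J\subsetneq K$. A sentence is factual if built using only $\wedge,\vee,\exists,\forall$ and implications $\phi\to\bot$. $\Gamma_1,\Gamma_2$ over $\mathcal L$ are uniformly equivalent iff for every signature $\mathcal L'\supseteq\mathcal L$ and every factual theory $\Gamma$ over $\mathcal L'$, $\Gamma_1\cup\Gamma$ and $\Gamma_2\cup\Gamma$ have the same answer sets. $C_s(\Gamma)$ is the set of QHT-countermodels of $\Gamma$ (QHT-interpretations of $\mathcal L$ not satisfying $\Gamma$). $\langle I,J,K\rangle$ is there-closed in a set $S$ if $\langle I,K,K\rangle\notin S$ and $\langle I,J',K\rangle\in S$ for every $J\subseteq J'\subsetneq K$. *)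

(* Defs.v *)
From mathcomp Require Import all_boot.

Record sig := Sig {
  fsym : Type; psym : Type;
  farity : fsym -> nat; parity : psym -> nat }.

Set Implicit Arguments. Unset Strict Implicit. Unset Printing Implicit Defensive.

(* Extension L' = L + new symbols.  Every signature L' ⊇ L is (up to renaming)
   of this form. *)
Definition ext (L : sig) (EF EP : Type) (ea : EF -> nat) (ep : EP -> nat) : sig :=
  {| fsym := (fsym L + EF)%type; psym := (psym L + EP)%type;
     farity := fun s => match s with inl f => farity L f | inr e => ea e end;
     parity := fun s => match s with inl p => parity L p | inr e => ep e end |}.

Inductive term (L : sig) : Type :=
| Var : nat -> term L
| App : forall f : fsym L, ('I_(farity L f) -> term L) -> term L.

Inductive form (L : sig) : Type :=
| Atom : forall p : psym L, ('I_(parity L p) -> term L) -> form L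
| Eq : term L -> term L -> form L
| Bot : form L
| And : form L -> form L -> form L
| Or : form L -> form L -> form L
| Imp : form L -> form L -> form L
| All : nat -> form L -> form L
| Ex : nat -> form L -> form L.
Arguments Bot {L}.

Fixpoint term_vars_in (L : sig) (B : nat -> Prop) (t : term L) : Prop :=
  match t with
  | Var x => B x
  | App f ts => forall i, term_vars_in B (ts i)
  end.

Fixpoint form_vars_in (L : sig) (B : nat -> Prop) (phi : form L) : Prop :=
  match phi with
  | Atom p ts => forall i, term_vars_in B (ts i)
  | Eq t1 t2 => term_vars_in B t1 /\ term_vars_in B t2
  | Bot => True
  | And a b | Or a b | Imp a b => form_vars_in B a /\ form_vars_in B b
  | All x a | Ex x a => form_vars_in (fun y => y = x \/ B y) a
  end.

Definition sentence (L : sig) (phi : form L) : Prop := form_vars_in (fun _ => False) phi.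

Definition theory (L : sig) := form L -> Prop.
Definition is_theory (L : sig) (G : theory L) : Prop := forall phi, G phi -> sentence phi.

Fixpoint factual (L : sig) (phi : form L) : Prop :=
  match phi with
  | Atom _ _ | Eq _ _ | Bot => True
  | And a b | Or a b => factual a /\ factual b
  | Imp a Bot => factual a
  | Imp _ _ => False
  | All _ a | Ex _ a => factual a
  end.

Definition factual_theory (L : sig) (G : theory L) : Prop :=
  forall phi, G phi -> sentence phi /\ factual phi.

Fixpoint emb_term L EF EP ea ep (t : term L) : term (@ext L EF EP ea ep) :=
  match t with
  | Var x => Var _ x
  | App f ts => @App (ext L ea ep) (inl f) (fun i => emb_term ea ep (ts i))
  end.

Fixpoint emb_form L EF EP ea ep (phi : form L) : form (@ext L EF EP ea ep) :=
  match phi with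
  | Atom p ts => @Atom (ext L ea ep) (inl p) (fun i => emb_term ea ep (ts i))
  | Eq t1 t2 => Eq (emb_term ea ep t1) (emb_term ea ep t2)
  | Bot => Bot
  | And a b => And (emb_form ea ep a) (emb_form ea ep b)
  | Or a b => Or (emb_form ea ep a) (emb_form ea ep b)
  | Imp a b => Imp (emb_form ea ep a) (emb_form ea ep b)
  | All x a => All x (emb_form ea ep a)
  | Ex x a => Ex x (emb_form ea ep a)
  end.

Definition emb_theory L EF EP (ea : EF -> nat) (ep : EP -> nat) (G : theory L)
  : theory (ext L ea ep) := fun psi => exists phi, G phi /\ psi = emb_form ea ep phi.

Definition union_th L (A B : theory L) : theory L := fun phi => A phi \/ B phi.

(* Semantics.  U is the universe; I interprets function symbols on U;
   ground atoms p(c_e1,..,c_en) are pairs (p, (e1,..,en)). *)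
Definition finterp (L : sig) (U : Type) := forall f : fsym L, (farity L f).-tuple U -> U.
Definition atom (L : sig) (U : Type) := {p : psym L & (parity L p).-tuple U}.
Definition atoms (L : sig) (U : Type) := atom L U -> Prop.

Definition subset_at L U (A B : atoms L U) : Prop := forall a, A a -> B a.
Definition strict_subset_at L U (A B : atoms L U) : Prop :=
  subset_at A B /\ exists a, B a /\ ~ A a.

Definition upd (U : Type) (env : nat -> U) (x : nat) (e : U) : nat -> U :=
  fun y => if y == x then e else env y.

Fixpoint eval L U (I : finterp L U) (env : nat -> U) (t : term L) : U :=
  match t with
  | Var x => env x
  | App f ts => I f [tuple eval I env (ts i) | i < farity L f]
  end.

Definition ground_atom L U (I : finterp L U) (env : nat -> U) (p : psym L)
  (ts : 'I_(parity L p) -> term L) : atom L U :=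
  existT _ p [tuple eval I env (ts i) | i < parity L p].

Fixpoint csat L U (I : finterp L U) (K : atoms L U) (env : nat -> U) (phi : form L) : Prop :=
  match phi with
  | Atom p ts => K (ground_atom I env ts)
  | Eq t1 t2 => eval I env t1 = eval I env t2
  | Bot => False
  | And a b => csat I K env a /\ csat I K env b
  | Or a b => csat I K env a \/ csat I K env b
  | Imp a b => csat I K env a -> csat I K env b
  | All x a => forall e, csat I K (upd env x e) a
  | Ex x a => exists e, csat I K (upd env x e) a
  end.

Fixpoint hsat L U (I : finterp L U) (J K : atoms L U) (env : nat -> U) (phi : form L) : Prop :=
  match phi with
  | Atom p ts => J (ground_atom I env ts)
  | Eq t1 t2 => eval I env t1 = eval I env t2
  | Bot => False
  | And a b => hsat I J K env a /\ hsat I J K env b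
  | Or a b => hsat I J K env a \/ hsat I J K env b
  | Imp a b => (~ hsat I J K env a \/ hsat I J K env b) /\ csat I K env (Imp a b)
  | All x a => forall e, hsat I J K (upd env x e) a /\ csat I K (upd env x e) a
  | Ex x a => exists e, hsat I J K (upd env x e) a
  end.

(* <I,J,K> |= Gamma  (sentences: the environment is irrelevant) *)
Definition hsat_th L U (I : finterp L U) (J K : atoms L U) (G : theory L) : Prop :=
  forall phi, G phi -> forall env : nat -> U, hsat I J K env phi.

Definition answer_set L U (I : finterp L U) (K : atoms L U) (G : theory L) : Prop :=
  hsat_th I K K G /\ forall J, strict_subset_at J K -> ~ hsat_th I J K G.

Definition unif_equiv (L : sig) (G1 G2 : theory L) : Prop :=
  forall (EF EP : Type) (ea : EF -> nat) (ep : EP -> nat) (G : theory (ext L ea ep)),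
    factual_theory G ->
    forall (U : Type), inhabited U ->
    forall (I : finterp (ext L ea ep) U) (K : atoms (ext L ea ep) U),
      answer_set I K (union_th (@emb_theory L EF EP ea ep G1) G) <->
      answer_set I K (union_th (@emb_theory L EF EP ea ep G2) G).

Definition Cs L (G : theory L) U (I : finterp L U) (J K : atoms L U) : Prop :=
  subset_at J K /\ ~ hsat_th I J K G.

Definition there_closed L U
  (S : finterp L U -> atoms L U -> atoms L U -> Prop)
  (I : finterp L U) (J K : atoms L U) : Prop :=
  ~ S I K K /\ forall J', subset_at J J' -> strict_subset_at J' K -> S I J' K.

(* Main.v *)
Require Import Defs.
From mathcomp Require Import all_boot.
From Stdlib Require Import Setoid Classical FunctionalExtensionality PropExtensionality.
Set Implicit Arguments. Unset Strict Implicit.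

Definition resI L EF EP (ea : EF -> nat) (ep : EP -> nat) U
  (I : finterp (ext L ea ep) U) : finterp L U := fun f => I (inl f).
Definition resA L EF EP (ea : EF -> nat) (ep : EP -> nat) U
  (A : atoms (ext L ea ep) U) : atoms L U :=
  fun a => A (@existT (psym (ext L ea ep)) (fun s => (parity (ext L ea ep) s).-tuple U)
                      (inl (projT1 a)) (projT2 a)).

Lemma eval_emb L EF EP (ea : EF -> nat) (ep : EP -> nat) U (I : finterp (ext L ea ep) U) env (t : term L) :
  eval I env (emb_term ea ep t) = eval (resI I) env t.
Proof.
elim: t => [x|f ts IH] //=.
rewrite /resI; congr (I (inl f) _); apply: eq_from_tnth => i; rewrite !tnth_mktuple; exact: IH.
Qed.

Lemma ground_emb L EF EP (ea : EF -> nat) (ep : EP -> nat) U (I : finterp (ext L ea ep) U) (A : atoms (ext L ea ep) U) env p ts :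
  A (ground_atom I env (p := inl p) (fun i => emb_term ea ep (ts i))) <-> resA A (ground_atom (resI I) env ts).
Proof.
rewrite /resA /ground_atom /=.
have -> : [tuple eval I env (emb_term ea ep (ts i)) | i < parity L p] = [tuple eval (resI I) env (ts i) | i < parity L p].
  by apply: eq_from_tnth => i; rewrite !tnth_mktuple eval_emb.
by [].
Qed.

Lemma csat_emb L EF EP (ea : EF -> nat) (ep : EP -> nat) U (I : finterp (ext L ea ep) U) K phi : forall env,
  csat I K env (emb_form ea ep phi) <-> csat (resI I) (resA K) env phi.
Proof.
elim: phi => [p ts|t1 t2| |a IHa b IHb|a IHa b IHb|a IHa b IHb|x a IHa|x a IHa] env /=.
- exact: ground_emb.
- by rewrite !eval_emb.
- by [].
- by rewrite IHa IHb.
- by rewrite IHa IHb.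
- by rewrite IHa IHb.
- by split => H e; apply/IHa; apply: H.
- by split => -[e H]; exists e; apply/IHa.
Qed.

Lemma hsat_emb L EF EP (ea : EF -> nat) (ep : EP -> nat) U (I : finterp (ext L ea ep) U) J K phi : forall env,
  hsat I J K env (emb_form ea ep phi) <-> hsat (resI I) (resA J) (resA K) env phi.
Proof.
elim: phi => [p ts|t1 t2| |a IHa b IHb|a IHa b IHb|a IHa b IHb|x a IHa|x a IHa] env /=.
- exact: ground_emb.
- by rewrite !eval_emb.
- by [].
- by rewrite IHa IHb.
- by rewrite IHa IHb.
- by rewrite IHa IHb !csat_emb.
- by split => H e; case: (H e) => h c; split; first [by apply/IHa | by apply/csat_emb].
- by split => -[e H]; exists e; apply/IHa.
Qed.

Lemma hsat_th_emb L EF EP (ea : EF -> nat) (ep : EP -> nat) U (I : finterp (ext L ea ep) U) J K G :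
  hsat_th I J K (@emb_theory L EF EP ea ep G) <-> hsat_th (resI I) (resA J) (resA K) G.
Proof.
split => H phi.
- by move=> Gphi env; apply/hsat_emb; apply: H; exists phi.
- by move=> [psi [Gpsi ->]] env; apply/hsat_emb; apply: H.
Qed.

Lemma hsat_th_union L U (I : finterp L U) J K A B :
  hsat_th I J K (union_th A B) <-> hsat_th I J K A /\ hsat_th I J K B.
Proof.
split.
- by move=> H; split=> phi Hp; apply: H; [left|right].
- by move=> [HA HB] phi [Hp|Hp]; [apply: HA|apply: HB].
Qed.

Lemma persist L U (I : finterp L U) J K (sJK : subset_at J K) phi : forall env,
  hsat I J K env phi -> csat I K env phi.
Proof.
elim: phi => [p ts|t1 t2| |a IHa b IHb|a IHa b IHb|a IHa b IHb|x a IHa|x a IHa] env /=.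
- exact: sJK.
- by [].
- by [].
- by move=> [/IHa ? /IHb ?].
- by move=> [/IHa ?|/IHb ?]; [left|right].
- by move=> [].
- by move=> H e; case: (H e).
- by move=> [e /IHa H]; exists e.
Qed.

Lemma factual_up L U (I : finterp L U) J J2 K (s1 : subset_at J J2) (s2 : subset_at J2 K) phi :
  factual phi -> forall env, hsat I J K env phi -> hsat I J2 K env phi.
Proof.
elim: phi => [p ts|t1 t2| |a IHa b IHb|a IHa b IHb|a IHa b IHb|x a IHa|x a IHa] /=.
- by move=> _ env; apply: s1.
- by [].
- by [].
- by move=> [fa fb] env [ha hb]; split; [exact: IHa|exact: IHb].
- by move=> [fa fb] env [ha|hb]; [left; exact: IHa|right; exact: IHb].
- move: IHb; case: b => //= _ fa env [_ c]; split => //.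
  by left => h2; apply: c; apply: (persist s2).
- by move=> fa env H e; case: (H e) => h c; split => //; apply: IHa.
- by move=> fa env [e h]; exists e; apply: IHa.
Qed.

Definition liftA L EF EP (ea : EF -> nat) (ep : EP -> nat) U (A : atoms L U) : atoms (ext L ea ep) U :=
  fun a => match a with existT s t =>
    (match s return (parity (ext L ea ep) s).-tuple U -> Prop with
     | inl p => fun t => A (existT _ p t) | inr _ => fun _ => False end) t end.
Arguments liftA {L EF EP} ea ep {U} A.

Lemma resA_liftA L EF EP (ea : EF -> nat) (ep : EP -> nat) U (A : atoms L U) :
  resA (liftA ea ep A) = A.
Proof. by apply: functional_extensionality => -[p t]. Qed.

Lemma liftA_sub L EF EP (ea : EF -> nat) (ep : EP -> nat) U (A : atoms L U) (B : atoms (ext L ea ep) U) :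
  subset_at A (resA B) -> subset_at (liftA ea ep A) B.
Proof. by move=> sAB [[p|e] t] //= h; apply: (sAB (existT _ p t)). Qed.

Lemma half L (G1 G2 : theory L)
  (H : forall (U : Type), inhabited U -> forall (I : finterp L U) (J K : atoms L U), subset_at J K ->
     there_closed (Cs G1 (U:=U)) I J K -> there_closed (Cs G2 (U:=U)) I J K)
  EF EP (ea : EF -> nat) (ep : EP -> nat) (G : theory (ext L ea ep)) :
  factual_theory G -> forall U, inhabited U -> forall (I : finterp (ext L ea ep) U) K,
  answer_set I K (union_th (@emb_theory L EF EP ea ep G1) G) ->
  answer_set I K (union_th (@emb_theory L EF EP ea ep G2) G).
Proof.
move=> fG U inhU I K [HK Hmin].
move/hsat_th_union: HK => [/hsat_th_emb HK1 HKG].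
have TC1K : there_closed (Cs G1 (U:=U)) (resI I) (resA K) (resA K).
  split; first by case.
  by move=> J' sKJ' [_ [a [Ka nJa]]]; case: nJa; apply: sKJ'.
have HK2 : hsat_th (resI I) (resA K) (resA K) G2.
  have [nC _] := H U inhU _ _ _ (fun a x => x) TC1K.
  by apply: NNPP => nh; apply: nC; split => // a x.
split.
  by apply/hsat_th_union; split => //; apply/hsat_th_emb.
move=> J sJK /hsat_th_union [/hsat_th_emb HJ2 HJG].
have nJ1 : ~ hsat_th (resI I) (resA J) (resA K) G1.
  by move=> h; apply: (Hmin J sJK); apply/hsat_th_union; split => //; apply/hsat_th_emb.
have sJK' : subset_at (resA J) (resA K) by move=> a; apply: sJK.1.
case: (classic (there_closed (Cs G1 (U:=U)) (resI I) (resA J) (resA K))) => [TC1|nTC1].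
- have [_ TC2] := H U inhU _ _ _ sJK' TC1.
  case: (classic (strict_subset_at (resA J) (resA K))) => [st|nst].
  + by have [_ []] := TC2 (resA J) (fun a x => x) st.
  + have E : resA J = resA K.
      apply: functional_extensionality => a; apply: propositional_extensionality; split; first exact: sJK'.
      move=> Ka; apply: NNPP => nJa; apply: nst; split => //; by exists a.
    by apply: nJ1; rewrite E.
- apply: nTC1; split; first by case.
  move=> J' sJJ' stJ'; split; first exact: stJ'.1.
  move=> hJ'.
  pose J2 : atoms (ext L ea ep) U := fun a => J a \/ liftA ea ep J' a.
  have s1 : subset_at J J2 by move=> a h; left.
  have s2 : subset_at J2 K.
    move=> a [h|h]; first exact: sJK.1.
    exact: (liftA_sub stJ'.1).
  have st2 : strict_subset_at J2 K.
    split => //.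
    case: stJ'.2 => -[p t] [Ka nJa].
    exists (existT _ (inl p) t); split => //.
    by move=> [h|h]; apply: nJa => //; apply: (sJJ' (existT _ p t)).
  have E : resA J2 = J'.
    apply: functional_extensionality => -[p t]; apply: propositional_extensionality; split.
    + by move=> [h|h] //; apply: (sJJ' (existT _ p t)).
    + by move=> h; right.
  apply: (Hmin J2 st2); apply/hsat_th_union; split.
  + by apply/hsat_th_emb; rewrite E.
  + move=> phi Gphi env; have [_ fphi] := fG phi Gphi.
    by apply: (factual_up s1 s2 fphi); apply: HJG.
Qed.

Definition EL (L : sig) (U : Type) := @ext L U False (fun _ : U => 0) (fun _ : False => 0).

Definition extI L U (I : finterp L U) : finterp (EL L U) U :=
  fun f => match f return (farity (EL L U) f).-tuple U -> U with
           | inl f0 => I f0 | inr e => fun _ => e end.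

Definition factTh L U (S : atoms L U) : theory (EL L U) :=
  fun phi => exists p (t : (parity L p).-tuple U), S (existT _ p t) /\
    phi = @Atom (EL L U) (inl p) (fun i => @App (EL L U) (inr (tnth t i)) (fun _ => Var _ 0)).

Lemma factTh_factual L U (S : atoms L U) : factual_theory (factTh S).
Proof.
move=> phi [p [t [_ ->]]]; split => //.
by move=> i /= [j hj].
Qed.

Lemma hsat_facts L U (u : U) (I : finterp L U) (J K : atoms (EL L U) U) (S : atoms L U) :
  hsat_th (extI I) J K (factTh S) <-> subset_at S (resA J).
Proof.
have tupE : forall p (t : (parity L p).-tuple U),
   [tuple tnth t i | i < parity L p] = t.
  by move=> p t; apply: eq_from_tnth => i; rewrite tnth_mktuple.
split.
- move=> H [p t] St.
  have := H _ (ex_intro _ p (ex_intro _ t (conj St erefl))) (fun _ => u).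
  by rewrite /= /ground_atom /= tupE.
- move=> H phi [p [t [St ->]]] env.
  by rewrite /= /ground_atom /= tupE; apply: (H (existT _ p t)).
Qed.

Lemma TC_AS L (G : theory L) U (u : U) (I : finterp L U) (J K : atoms L U) :
  subset_at J K ->
  there_closed (Cs G (U:=U)) I J K <->
  answer_set (extI I) (liftA (fun _ : U => 0) (fun _ : False => 0) K)
     (union_th (@emb_theory L U False (fun _ : U => 0) (fun _ : False => 0) G) (factTh J)).
Proof.
move=> sJK; split.
- move=> [nC TC].
  have HK : hsat_th I K K G by apply: NNPP => nh; apply: nC; split => // a x.
  split.
    apply/hsat_th_union; split.
      by apply/hsat_th_emb; rewrite resA_liftA.
    by apply/(hsat_facts u); rewrite resA_liftA.
  move=> J'' st /hsat_th_union [/hsat_th_emb h1 /(hsat_facts u) h2].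
  rewrite resA_liftA in h1.
  have st' : strict_subset_at (resA J'') K.
    split.
      by move=> [p t] h; apply: (st.1 (existT _ (inl p) t)).
    case: st.2 => -[[p|e] t] //= [Ka nJa].
    by exists (existT _ p t).
  by have [_ []] := TC _ h2 st'.
- move=> [HK Hmin].
  move/hsat_th_union: HK => [/hsat_th_emb HK _].
  rewrite resA_liftA in HK.
  split; first by case.
  move=> J' sJJ' stJ'; split; first exact: stJ'.1.
  move=> hJ'; apply: (Hmin (liftA (fun _ : U => 0) (fun _ : False => 0) J')).
    split.
      by apply: liftA_sub; rewrite resA_liftA; exact: stJ'.1.
    case: stJ'.2 => -[p t] [Ka nJa].
    by exists (existT _ (inl p) t).
  apply/hsat_th_union; split.
    by apply/hsat_th_emb; rewrite !resA_liftA.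
  by apply/(hsat_facts u); rewrite resA_liftA.
Qed.

Theorem mainTheorem15 (L : sig) (G1 G2 : theory L) :
  is_theory G1 -> is_theory G2 ->
  unif_equiv G1 G2 <->
  (forall (U : Type), inhabited U ->
   forall (I : finterp L U) (J K : atoms L U), subset_at J K ->
     (there_closed (Cs G1 (U:=U)) I J K <-> there_closed (Cs G2 (U:=U)) I J K)).
Proof.
move=> _ _; split.
- move=> UE U [u] I J K sJK.
  rewrite (TC_AS G1 u I sJK) (TC_AS G2 u I sJK).
  have := (UE U False (fun _ : U => 0) (fun _ : False => 0) (factTh J) (@factTh_factual L U J) U (inhabits u) (extI I)). by move=> X; apply: X.
- move=> H EF EP ea ep G fG U inhU I K; split; apply: half => //.
  + by move=> U' iU' I' J K' sJK /(H U' iU' I' J K' sJK).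
  + by move=> U' iU' I' J K' sJK /(H U' iU' I' J K' sJK).
Qed.
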